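(* Let $G=(V,E)$ be a directed multigraph with arc costs $c$ and gains $\gamma>0$, $u\in V$, and let $G_u$ and $f$ be as in the context. Let $\delta^{(1)}>\delta^{(2)}>\dots>\delta^{(\ell)}$ be real numbers, and for each $i\in[\ell]$ let $P^{(i)}$ be a $u$-$u'$ path in $G_u$ such that the unit flow on $P^{(i)}$ is an optimal solution of the primal LP for $f(\delta^{(i)})$. Then the sequence $(P^{(1)},\dots,P^{(\ell)})$ satisfies subpath monotonicity at $u$: for all $i<j$ and every node $v\ne u$ lying on both $P^{(i)}$ and $P^{(j)}$, $\gamma(P^{(i)}_{uv})\le\gamma(P^{(j)}_{uv})$.
   Context: $G_u$ is obtained from $G$ by splitting $u$ into $u$ (keeping its outgoing arcs) and a new node $u'$ to which all arcs entering $u$ are redirected (with the same costs and gains). For a walk $P$ with arcs $e_1,\dots,e_k$: $c(P):=\sum_i(\prod_{j<i}\gamma_{e_j})c_{e_i}$, $\gamma(P):=\prod_i\gamma_{e_i}$; $P_{uv}$ is the subpath of $P$ from $u$ to $v$. $\mathcal{D}:=\{x\in\mathbb{R}^E_{\ge0}: x(\delta^+(u))=1,\ \sum_{e\in\delta^+(v)}x_e-\sum_{e\in\delta^-(v)}\gamma_ex_e=0\ \forall v\ne u\}$; the primal LP for $f(\delta)$ is $\min\{c^\top x+\delta\sum_{e\in\delta^-(u)}\gamma_ex_e-\delta: x\in\mathcal{D}\}$, with value $f(\delta)$. The unit flow on a $u$-$u'$ path $P$ with arcs $e_1,\dots,e_k$ is the vector $x$ with $x_{e_i}:=\prod_{j<i}\gamma_{e_j}$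 on the corresponding arcs of $G$ and $0$ elsewhere. *)

(* Defs.v *)
From HB Require Import structures.
From mathcomp Require Import all_boot all_order all_algebra.
From mathcomp Require Import reals.
Set Implicit Arguments. Unset Strict Implicit. Unset Printing Implicit Defensive.
Import Order.TTheory GRing.Theory Num.Theory.
Local Open Scope ring_scope.

(* A directed multigraph G = (V, E): arcs e : E with tail [tl e] and head [hd e]. *)

(* The split graph G_u: node set [option V], where [Some v] is the node v of G
   (in particular [Some u] is u, keeping its outgoing arcs) and [None] is the new
   node u'. *)
Definition tailu (V E : finType) (tl : E -> V) (e : E) : option V := Some (tl e).
Definition headu (V E : finType) (hd : E -> V) (u : V) (e : E) : option V :=
  if hd e == u then None else Some (hd e).

Fixpoint is_walk_u (V E : finType) (tl hd : E -> V) (u : V)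
    (x : option V) (p : seq E) : bool :=
  match p with
  | [::] => true
  | e :: p' => (tailu tl e == x) && is_walk_u tl hd u (headu hd u e) p'
  end.

Definition nodes_u (V E : finType) (hd : E -> V) (u : V) (p : seq E)
  : seq (option V) := Some u :: map (headu hd u) p.

Definition is_uu'_path (V E : finType) (tl hd : E -> V) (u : V) (p : seq E) :=
  [&& is_walk_u tl hd u (Some u) p,
      last (Some u) (map (headu hd u) p) == None
    & uniq (nodes_u hd u p)].

(* gamma(P_{uv}): product of the gains of the arcs of P from u up to the
   (first, hence unique) arrival at node v. *)
Fixpoint gain_upto (R : realType) (V E : finType) (hd : E -> V) (u : V)
    (gam : E -> R) (v : option V) (p : seq E) : R :=
  match p with
  | [::] => 1
  | e :: p' => gam e * (if headu hd u e == v then 1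
                        else gain_upto hd u gam v p')
  end.

(* unit flow on a path e_1..e_k : x_{e_i} = prod_{j<i} gamma_{e_j}, 0 elsewhere *)
Fixpoint unit_flow_aux (R : realType) (E : finType) (gam : E -> R)
    (g : R) (p : seq E) : E -> R :=
  match p with
  | [::] => fun _ => 0
  | e :: p' => fun a => (if a == e then g else 0) + unit_flow_aux gam (g * gam e) p' a
  end.
Definition unit_flow (R : realType) (E : finType) (gam : E -> R) (p : seq E) : E -> R :=
  unit_flow_aux gam 1 p.

Definition outflow (R : realType) (V E : finType) (tl : E -> V) (x : E -> R) (v : V) : R :=
  \sum_(e : E | tl e == v) x e.
Definition gain_inflow (R : realType) (V E : finType) (hd : E -> V) (gam : E -> R)
    (x : E -> R) (v : V) : R :=
  \sum_(e : E | hd e == v) gam e * x e.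

Definition in_D (R : realType) (V E : finType) (tl hd : E -> V) (gam : E -> R)
    (u : V) (x : E -> R) : Prop :=
  [/\ forall e, 0 <= x e,
      outflow tl x u = 1
    & forall v, v != u -> outflow tl x v - gain_inflow hd gam x v = 0].

Definition primal_obj (R : realType) (V E : finType) (hd : E -> V) (c gam : E -> R)
    (u : V) (delta : R) (x : E -> R) : R :=
  \sum_(e : E) c e * x e + delta * gain_inflow hd gam x u - delta.

Definition primal_optimal (R : realType) (V E : finType) (tl hd : E -> V)
    (c gam : E -> R) (u : V) (delta : R) (x : E -> R) : Prop :=
  in_D tl hd gam u x /\
  forall y, in_D tl hd gam u y -> primal_obj hd c gam u delta x <= primal_obj hd c gam u delta y.

(* Main.v *)
Require Import Defs.
From HB Require Import structures.
From mathcomp Require Import all_boot all_order all_algebra.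
From mathcomp Require Import reals.
From mathcomp Require Import ring lra.
Import Order.TTheory GRing.Theory Num.Theory.
Local Open Scope ring_scope.

Section Aux.
Variables (R : realType) (V E : finType) (tl hd : E -> V) (c gam : E -> R) (u : V).
Hypothesis gam_pos : forall e, 0 < gam e.

Definition real (o : option V) : V := odflt u o.
Definition gp (p : seq E) : R := foldr (fun e r => gam e * r) 1 p.
Definition cost (p : seq E) : R := foldr (fun e r => c e + gam e * r) 0 p.
Local Notation h := (headu hd u).
Local Notation flow := (unit_flow_aux gam).

Lemma real_h e : real (h e) = hd e.
Proof. by rewrite /real /headu; case: ifP => // /eqP ->. Qed.

Lemma gp_gt0 p : 0 < gp p.
Proof. by elim: p => //= e p IH; rewrite mulr_gt0. Qed.

Lemma gp_cat A B : gp (A ++ B) = gp A * gp B.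
Proof. by elim: A => [|e A IH] /=; rewrite ?mul1r // IH mulrA. Qed.

Lemma cost_cat A B : cost (A ++ B) = cost A + gp A * cost B.
Proof. elim: A => [|e A IH] /=; rewrite ?add0r ?mul1r // IH; ring. Qed.

Lemma walk_cat s A B : is_walk_u tl hd u s (A ++ B) =
  is_walk_u tl hd u s A && is_walk_u tl hd u (last s (map h A)) B.
Proof. by elim: A s => [|e A IH] s //=; rewrite IH andbA. Qed.

Lemma sum_ind (F : E -> R) e (g : R) :
  \sum_a F a * (if a == e then g else 0) = F e * g.
Proof.
rewrite (bigD1 e) //= eqxx big1 ?addr0 // => a /negbTE ->; by rewrite mulr0.
Qed.

Lemma sum_indP (P : pred E) e (g : R) :
  \sum_(a | P a) (if a == e then g else 0) = if P e then g else 0.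
Proof.
rewrite big_mkcond (bigD1 e) //= eqxx big1 ?addr0 //.
by move=> a /negbTE ->; case: (P a).
Qed.

Lemma sum_indP' (P : pred E) e (g : R) :
  \sum_(a | P a) gam a * (if a == e then g else 0) = if P e then gam e * g else 0.
Proof.
rewrite big_mkcond (bigD1 e) //= eqxx big1 ?addr0.
  by case: (P e).
by move=> a /negbTE ->; case: (P a); rewrite ?mulr0.
Qed.

Lemma flow_ge0 p g : 0 <= g -> forall a, 0 <= flow g p a.
Proof.
elim: p g => [|e p IH] g g0 a //=.
apply: addr_ge0; first by case: ifP.
by apply: IH; rewrite mulr_ge0 // ltW.
Qed.

Lemma sum_cost p g : \sum_a c a * flow g p a = g * cost p.
Proof.
elim: p g => [|e p IH] g /=.
  by rewrite big1 ?mulr0 // => a _; rewrite mulr0.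
under eq_bigr do rewrite mulrDr.
by rewrite big_split /= sum_ind IH; ring.
Qed.

Lemma out_cons e p g w :
  outflow tl (flow g (e :: p)) w = (if tl e == w then g else 0) + outflow tl (flow (g * gam e) p) w.
Proof. by rewrite /outflow /= big_split /= sum_indP. Qed.

Lemma gin_cons e p g w :
  gain_inflow hd gam (flow g (e :: p)) w =
  (if hd e == w then gam e * g else 0) + gain_inflow hd gam (flow (g * gam e) p) w.
Proof.
rewrite /gain_inflow /=.
under eq_bigr do rewrite mulrDr.
by rewrite big_split /= sum_indP'.
Qed.

Lemma net g s p w : is_walk_u tl hd u s p ->
  outflow tl (flow g p) w - gain_inflow hd gam (flow g p) w =
  (if real s == w then g else 0) - (if real (last s (map h p)) == w then g * gp p else 0).
Proof.
elim: p g s => [|e p IH] g s /=.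
  move=> _; rewrite /outflow /gain_inflow !big1 ?subrr;
    try by move=> *; rewrite ?mulr0.
  by case: ifP; rewrite ?mulr1 subrr.
case/andP=> /eqP ts wp.
rewrite out_cons gin_cons.
have := IH (g * gam e) _ wp; rewrite real_h => IH'.
have -> : real s = tl e by rewrite -ts.
set A := outflow _ _ _ in IH' *; set B := gain_inflow _ _ _ _ in IH' *.
have -> : A = B + ((if hd e == w then g * gam e else 0) -
   (if real (last (h e) [seq h i | i <- p]) == w then g * gam e * gp p else 0)).
  by rewrite -IH'; ring.
case: (tl e == w); case: (hd e == w); case: (real _ == w); ring.
Qed.

Lemma h_neq e : h e != Some u.
Proof. rewrite /headu; case: ifP => // /negbT; apply: contra => /eqP[->] //. Qed.

Lemma out_u0 g s p : s != Some u -> is_walk_u tl hd u s p -> outflow tl (flow g p) u = 0.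
Proof.
elim: p g s => [|e p IH] g s.
  by move=> _ _; rewrite /outflow big1.
move=> su /= /andP[/eqP ts wp].
rewrite out_cons (IH _ _ (h_neq e) wp) addr0.
case: ifP => // /eqP te; move: su; by rewrite -ts /tailu te eqxx.
Qed.

Lemma walk_D p : is_walk_u tl hd u (Some u) p -> last (Some u) (map h p) = None ->
  in_D tl hd gam u (unit_flow gam p) /\
  forall d, primal_obj hd c gam u d (unit_flow gam p) = cost p + d * gp p - d.
Proof.
move=> wp lp.
have o1 : outflow tl (unit_flow gam p) u = 1.
  case: p wp lp => [|e p] //= /andP[/eqP ts wp'] _.
  rewrite /unit_flow out_cons (out_u0 _ _ _ (h_neq e) wp') addr0.
  by case: ts => ->; rewrite eqxx.
have N := fun w => net 1 (Some u) p w wp.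
rewrite lp /= in N.
split; first split => //.
- by move=> a; apply: flow_ge0.
- move=> w wu; rewrite /unit_flow N /real /=.
  by rewrite eq_sym (negbTE wu) subrr.
move=> d; rewrite /primal_obj /unit_flow sum_cost mul1r.
have := N u; rewrite /real /= eqxx -/(unit_flow gam p) o1 => H.
have -> : gain_inflow hd gam (unit_flow gam p) u = gp p.
  by move: H; rewrite /unit_flow mul1r; lra.
done.
Qed.

Lemma split_at v p : Some v \in map h p -> exists A B,
  [/\ p = A ++ B, gain_upto hd u gam (Some v) p = gp A & forall x, last x (map h A) = Some v].
Proof.
elim: p => [|e p IH] //=; rewrite in_cons.
case: (eqVneq (h e) (Some v)) => [he _ | hne /= /IH [A [B [-> g1 l1]]]].
  by exists [:: e], p; split => //=; rewrite he eqxx.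
exists (e :: A), B; split => //=; first by rewrite g1.
Qed.

Definition uupath p := is_walk_u tl hd u (Some u) p && (last (Some u) (map h p) == None).

Lemma opt_ineq d p q : primal_optimal tl hd c gam u d (unit_flow gam p) ->
  uupath p -> uupath q -> cost p + d * gp p <= cost q + d * gp q.
Proof.
case=> _ opt /andP[wp /eqP lp] /andP[wq /eqP lq].
have [_ op] := walk_D _ wp lp; have [Dq oq] := walk_D _ wq lq.
have := opt _ Dq; rewrite op oq; lra.
Qed.

Lemma main_aux v (di dj : R) Pi Pj : dj < di -> v != u ->
  is_uu'_path tl hd u Pi -> is_uu'_path tl hd u Pj ->
  primal_optimal tl hd c gam u di (unit_flow gam Pi) ->
  primal_optimal tl hd c gam u dj (unit_flow gam Pj) ->
  Some v \in nodes_u hd u Pi -> Some v \in nodes_u hd u Pj ->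
  gain_upto hd u gam (Some v) Pi <= gain_upto hd u gam (Some v) Pj.
Proof.
move=> dij vu /and3P[wi li _] /and3P[wj lj _] oi oj.
have vne : (Some v == Some u) = false by apply/negbTE; apply: contra vu => /eqP[->].
rewrite /nodes_u !in_cons vne /=.
move=> /split_at [Ai [Bi [Pie gi lAi]]] /split_at [Aj [Bj [Pje gj lAj]]].
rewrite gi gj.
have upi : uupath Pi by apply/andP.
have upj : uupath Pj by apply/andP.
move: wi li wj lj; rewrite Pie Pje !walk_cat !map_cat !last_cat !lAi !lAj.
move=> /andP[wAi wBi] lBi /andP[wAj wBj] lBj.
have uq2 : uupath (Aj ++ Bi) by rewrite /uupath walk_cat map_cat last_cat !lAj wAj wBi.
have uq1 : uupath (Ai ++ Bj) by rewrite /uupath walk_cat map_cat last_cat !lAi wAi wBj.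
have I1 := opt_ineq _ _ _ oi upi uq2.
have I2 := opt_ineq _ _ _ oj upj uq1.
have I3 := opt_ineq _ _ _ oj upj uq2.
move: I1 I2 I3; rewrite Pie Pje !gp_cat !cost_cat.
have ai0 := gp_gt0 Ai; have aj0 := gp_gt0 Aj; have bi0 := gp_gt0 Bi; have bj0 := gp_gt0 Bj.
move: (gp Ai) (gp Aj) (gp Bi) (gp Bj) (cost Ai) (cost Aj) (cost Bi) (cost Bj) ai0 aj0 bi0 bj0.
move=> ai aj bi bj Ci Cj Di Dj ai0 aj0 bi0 bj0 I1 I2 I3.
rewrite leNgt; apply/negP => ltij.
have H12 : (ai - aj) * ((Di + di * bi) - (Dj + dj * bj)) <= 0.
  by move: I1 I2; nra.
have H1 : (Di + di * bi) <= (Dj + dj * bj).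
  by move: H12; rewrite pmulr_rle0 ?subr_gt0 //; lra.
have H3 : aj * ((Dj + dj * bj) - (Di + dj * bi)) <= 0 by move: I3; nra.
have H3' : (Dj + dj * bj) <= (Di + dj * bi).
  by move: H3; rewrite pmulr_rle0 //; lra.
have : 0 < bi * (di - dj) by rewrite mulr_gt0 // subr_gt0.
nra.
Qed.

End Aux.

Theorem lemma4p10 (R : realType) (V E : finType) (tl hd : E -> V)
    (c gam : E -> R) (gam_pos : forall e, 0 < gam e) (u : V)
    (l : nat) (delta : 'I_l -> R) (P : 'I_l -> seq E) :
  (forall i j : 'I_l, (i < j)%N -> delta j < delta i) ->
  (forall i, is_uu'_path tl hd u (P i)) ->
  (forall i, primal_optimal tl hd c gam u (delta i) (unit_flow gam (P i))) ->
  forall (i j : 'I_l), (i < j)%N ->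
  forall v : V, v != u ->
    Some v \in nodes_u hd u (P i) -> Some v \in nodes_u hd u (P j) ->
    gain_upto hd u gam (Some v) (P i) <= gain_upto hd u gam (Some v) (P j).
Proof.
move=> hd_ hp ho i j ij v vu.
exact: (@main_aux R V E tl hd c gam u gam_pos v _ _ _ _ (hd_ i j ij) vu (hp i) (hp j) (ho i) (ho j)).
Qed.
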